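(* Let $A, B, C \in \mathbb{Z}$ with $A > 0$ such that $Ax^2 + Bx + C$ is irreducible, let $\beta$ be a real root of it and $\beta'$ its other root. Then the following are equivalent: (i) $p_\beta(\alpha) < \infty$ for every $\alpha \in \mathbb{R}$; (ii) either $2A + B \leq 0$, or ($2A + B > 0$ and $A + B + C < 0$); (iii) at least one of $\beta$ and $\beta'$ is greater than $1$.
   Context: For $\beta, \alpha \in \mathbb{C}$, $p_\beta(\alpha) \in \mathbb{Z}_{\geq 0}\cup\{\infty\}$ is the number of polynomials $f \in \mathbb{Z}_{\geq 0}[x]$ (non-negative integer coefficients) with $f(\beta) = \alpha$. *)

(* Defs.v *)
From HB Require Import structures.
From mathcomp Require Import all_boot all_order all_algebra.
From mathcomp Require Import boolp classical_sets cardinality reals.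
Set Implicit Arguments. Unset Strict Implicit. Unset Printing Implicit Defensive.
Import Order.TTheory GRing.Theory Num.Theory.
Local Open Scope ring_scope.
Local Open Scope classical_set_scope.

Definition quadZ (A B C : int) : {poly int} := A%:P * 'X^2 + B%:P * 'X + C%:P.

Definition evalN (R : realType) (f : {poly nat}) (beta : R) : R :=
  (map_poly (fun n : nat => n%:R : R) f).[beta].

(* p_beta(alpha) < oo : the set of f in Z_{>=0}[x] with f(beta) = alpha is finite. *)
Definition p_finite (R : realType) (beta alpha : R) : Prop :=
  finite_set [set f : {poly nat} | evalN f beta = alpha].

(* Main.v *)
Require Import Defs.
From HB Require Import structures.
From mathcomp Require Import all_boot all_order all_algebra.
From mathcomp Require Import boolp classical_sets cardinality reals.
From mathcomp Require Import ring lra.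
Import Order.TTheory GRing.Theory Num.Theory.
Local Open Scope ring_scope.



Fixpoint pumpseq (Rp f0 : {poly nat}) (k n : nat) : {poly nat} :=
  if n is n'.+1 then Rp + 'X^k * pumpseq Rp f0 k n' else f0.

Section Ev.
Variable R : realType.
Implicit Types (f g : {poly nat}) (b x : R).

Lemma evalND f g b : evalN (f + g) b = evalN f b + evalN g b.
Proof. by rewrite /evalN rmorphD hornerD. Qed.
Lemma evalNM f g b : evalN (f * g) b = evalN f b * evalN g b.
Proof. by rewrite /evalN rmorphM hornerM. Qed.
Lemma evalNX b : evalN 'X b = b.
Proof. by rewrite /evalN map_polyX hornerX. Qed.
Lemma evalNXn k b : evalN 'X^k b = b ^+ k.
Proof. by rewrite /evalN map_polyXn hornerXn. Qed.
Lemma evalNC (c : nat) b : evalN c%:P b = c%:R.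
Proof. by rewrite /evalN map_polyC hornerC. Qed.

Lemma evalN_sum f x : evalN f x = \sum_(i < size f) (nth 0%N f i)%:R * x ^+ i.
Proof.
have [->|nz] := eqVneq f 0.
  by rewrite /evalN map_poly0 horner0 size_poly0 big_ord0.
rewrite /evalN (@horner_coef_wide _ (size f)); last first.
  by rewrite size_map_poly_id0 // pnatr_eq0 lead_coef_eq0.
by apply: eq_bigr => i _; rewrite coef_map.
Qed.

Lemma evalN_ge0 f x : 0 <= x -> 0 <= evalN f x.
Proof.
by move=> x0; rewrite evalN_sum; apply: sumr_ge0 => i _; rewrite mulr_ge0 // exprn_ge0.
Qed.

Lemma evalN_term f x (i : nat) : 0 <= x -> (nth 0%N f i)%:R * x ^+ i <= evalN f x.
Proof.
move=> x0; have [lt|ge] := ltnP i (size f); last first.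
  by rewrite nth_default // mul0r evalN_ge0.
rewrite evalN_sum (bigD1 (Ordinal lt)) //= lerDl.
by apply: sumr_ge0 => j _; rewrite mulr_ge0 // exprn_ge0.
Qed.

Lemma evalN_gt0 f x : 0 < x -> f != 0 -> 0 < evalN f x.
Proof.
move=> x0 nz; have := evalN_term f x (size f).-1 (ltW x0); apply: lt_le_trans.
rewrite mulr_gt0 ?exprn_gt0 // ltr0n lt0n.
by have := nz; rewrite -lead_coef_eq0 /lead_coef.
Qed.

Lemma bernoulli (g : R) (n : nat) : 1 <= g -> 1 + n%:R * (g - 1) <= g ^+ n.
Proof.
move=> g1; elim: n => [|n IH]; first by rewrite mul0r addr0 expr0.
rewrite exprS -natr1.
have h1 : 0 <= g - 1 by rewrite subr_ge0.
have h2 : 0 <= n%:R * (g - 1) * (g - 1) by rewrite !mulr_ge0.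
have h3 : 0 <= g * (g ^+ n - (1 + n%:R * (g - 1))).
  by rewrite mulr_ge0 ?subr_ge0 //; apply: le_trans g1.
lra.
Qed.

Lemma pow_unbounded (g a : R) : 1 < g -> exists N : nat, a < g ^+ N.
Proof.
move=> g1; set y := `|a| / (g - 1).
have y0 : 0 <= y by rewrite divr_ge0 // subr_ge0 ltW.
have := archi_boundP y0; set N := Num.Def.archi_bound y => hN.
exists N; have := bernoulli g N (ltW g1); apply: lt_le_trans.
have gp : 0 < g - 1 by rewrite subr_gt0.
have : y * (g - 1) = `|a| by rewrite /y divfK // gt_eqF.
have := ler_norm a.
have h3 : y * (g - 1) < N%:R * (g - 1) by rewrite ltr_pM2r.
lra.
Qed.

Lemma fin_gt1 (g a : R) : 1 < g -> finite_set [set f : {poly nat} | evalN f g = a].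
Proof.
move=> g1.
have [N hN] := pow_unbounded g a g1.
have a0 : 0 <= `|a| by [].
have := archi_boundP a0; set M := Num.Def.archi_bound `|a| => hM.
pose F (h : {ffun 'I_N.+1 -> 'I_M.+1}) : {poly nat} := \poly_(i < N.+1) (h (inord i) : nat).
apply: (sub_finite_set _ (finite_image F (@finite_finset _ setT))).
move=> f /= ef.
have g0 : 0 <= g by apply: ltW; apply: lt_trans g1.
have hc : forall i, (nth 0%N f i <= M)%N.
  move=> i; rewrite -(ler_nat R); apply: ltW.
  have := evalN_term f g i g0; rewrite ef => h.
  have : 1 <= g ^+ i by rewrite exprn_ege1 // ltW.
  have : 0 <= (nth 0%N f i)%:R :> R by [].
  have := ler_norm a.
  nra.
have hs : (size f <= N)%N.
  case: (eqVneq f 0) => [->|nz]; first by rewrite size_poly0.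
  have := evalN_term f g (size f).-1 g0; rewrite ef => h.
  have l1 : 1 <= (nth 0%N f (size f).-1)%:R :> R.
    by rewrite ler1n lt0n; have := nz; rewrite -lead_coef_eq0 /lead_coef.
  have : 0 <= g ^+ (size f).-1 by rewrite exprn_ge0.
  move=> hp.
  have : g ^+ (size f).-1 < g ^+ N by nra.
  rewrite ltr_eXn2l //.
  by case: (size f).
exists [ffun i : 'I_N.+1 => inord (nth 0%N f i) : 'I_M.+1] => //.
apply/polyP => i; rewrite coef_poly.
case: ifP => [lt|ge]; last first.
  by rewrite nth_default //; apply: (leq_trans hs); apply: (leq_trans (leqnSn N)); rewrite leqNgt ge.
by rewrite ffunE inordK // inordK // ltnS.
Qed.


Lemma pump (b : R) (Rp f0 : {poly nat}) (k : nat) : Rp != 0 ->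
  evalN Rp b + b ^+ k * evalN f0 b = evalN f0 b -> ~ p_finite b (evalN f0 b).
Proof.
move=> nz hb fin.
have ev : forall n, evalN (pumpseq Rp f0 k n) b = evalN f0 b.
  by elim => [|n IH] //=; rewrite evalND evalNM evalNXn IH.
have two : (0 : R) < 2 by rewrite ltr0n.
have inc : forall n : nat, evalN (pumpseq Rp f0 k n) (2 : R) < evalN (pumpseq Rp f0 k n.+1) 2.
  move=> n; have -> : pumpseq Rp f0 k n.+1 = Rp + 'X^k * pumpseq Rp f0 k n by [].
  rewrite evalND evalNM evalNXn.
  have h1 := evalN_gt0 Rp (2:R) two nz.
  have h2 := evalN_ge0 (pumpseq Rp f0 k n) (2:R) (ltW two).
  have h3 : 1 <= (2 : R) ^+ k by apply: exprn_ege1; rewrite ler1n.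
  nra.
have mono : forall m n : nat, (m < n)%N -> evalN (pumpseq Rp f0 k m) (2 : R) < evalN (pumpseq Rp f0 k n) 2.
  move=> m; elim => [//|n IH]; rewrite ltnS leq_eqVlt => /orP [/eqP ->//|lt].
  exact: lt_trans (IH lt) (inc n).
have inj : injective (pumpseq Rp f0 k).
  move=> m n e; case: (ltngtP m n) => // lt.
    by have := mono _ _ lt; rewrite e ltxx.
  by have := mono _ _ lt; rewrite e ltxx.
have := finite_preimage (B := [set f : {poly nat} | evalN f b = evalN f0 b]) (f := pumpseq Rp f0 k) (in2W inj) fin.
move=> fp; apply: infinite_nat; apply: (sub_finite_set _ fp).
by move=> n _ /=; rewrite ev.
Qed.

End Ev.



Lemma coef_quadZ (A B C : int) (j : nat) :
  (quadZ A B C)`_j = A * (j == 2%N)%:R + B * (j == 1%N)%:R + C * (j == 0%N)%:R.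
Proof. by rewrite /quadZ !coefD !coefCM coefXn coefX coefC; case: j => [|[|[|j]]] /=; rewrite ?mulr0 ?mulr1. Qed.

Section Q.
Variables (R : realType) (A B C : int).
Hypothesis A0 : 0 < A.
Let qQ := map_poly (intr : int -> rat) (quadZ A B C).
Let qR := map_poly (intr : int -> R) (quadZ A B C).

Lemma rootq (x : R) : root qR x -> A%:~R * x ^+ 2 + B%:~R * x + C%:~R = 0.
Proof.
rewrite /root /qR /quadZ !rmorphD !rmorphM /= !map_polyC ?map_polyXn ?rmorphXn ?map_polyX /=.
by rewrite !hornerE => /eqP.
Qed.

Lemma qR_ratr : qR = map_poly ratr qQ.
Proof.
rewrite /qR /qQ -map_poly_comp; apply: eq_map_poly => z /=.
by rewrite ratr_int.
Qed.

Lemma qQ_coef2 : qQ`_2 = A%:~R.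
Proof. by rewrite /qQ coef_map /= coef_quadZ /= mulr1 !mulr0 !addr0. Qed.

Lemma size_qQ : (size qQ <= 3)%N.
Proof.
apply/leq_sizeP => j hj; rewrite /qQ coef_map /= coef_quadZ.
by case: j hj => [|[|[|j]]] //= _; rewrite !mulr0 !addr0.
Qed.

Lemma qQ_neq0 : qQ != 0.
Proof.
apply/eqP => e; have := qQ_coef2; rewrite e coef0 => /eqP.
by rewrite eq_sym intr_eq0 => /eqP eA; move: A0; rewrite eA.
Qed.

Lemma no_rat_root (s : rat) : irreducible_poly qQ -> ~ root qR (ratr s).
Proof.
move=> irr; rewrite qR_ratr /root horner_map fmorph_eq0 => r.
have dv : ('X - s%:P) %| qQ by rewrite dvdp_XsubCl.
have sz : size ('X - s%:P) != 1%N by rewrite size_XsubC.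
have /eqp_size := apply_irredp irr sz dv; rewrite size_XsubC => e.
have := qQ_coef2; rewrite nth_default -?e // => /eqP.
by rewrite eq_sym intr_eq0 => /eqP eA; move: A0; rewrite eA.
Qed.

Lemma conj_eval (f : {poly nat}) :
  exists a b : rat, forall x, root qR x -> evalN f x = ratr a * x + ratr b.
Proof.
pose fQ := map_poly (fun n : nat => n%:R : rat) f.
have ef : forall x : R, evalN f x = (map_poly ratr fQ).[x].
  move=> x; rewrite /evalN /fQ -map_poly_comp; congr (_.[x]).
  by apply: eq_map_poly => n /=; rewrite ratr_nat.
set r := fQ %% qQ.
have sr : (size r <= 2)%N.
  have := ltn_modp fQ qQ; rewrite qQ_neq0 => h.
  by rewrite -ltnS; apply: leq_trans h size_qQ.
exists r`_1, r`_0 => x rx.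
rewrite ef (divp_eq fQ qQ) rmorphD rmorphM /= hornerD hornerM -qR_ratr (eqP rx) mulr0 add0r.
rewrite (@horner_coef_wide _ 2); last by rewrite size_map_poly.
rewrite !big_ord_recr big_ord0 /= add0r expr0 expr1 mulr1 !coef_map /= addrC.
by [].
Qed.

Lemma conj_eq (b b' : R) (f g : {poly nat}) : irreducible_poly qQ ->
  root qR b -> root qR b' -> evalN f b = evalN g b -> evalN f b' = evalN g b'.
Proof.
move=> irr rb rb' e.
have [a1 [c1 h1]] := conj_eval f; have [a2 [c2 h2]] := conj_eval g.
move: e; rewrite (h1 _ rb) (h2 _ rb) (h1 _ rb') (h2 _ rb') => e.
have [ea|na] := eqVneq a1 a2.
  move: e; rewrite ea => /addrI ->; by [].
exfalso; apply: (no_rat_root ((c2 - c1) / (a1 - a2)) irr).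
have nz : ratr (a1 - a2) != 0 :> R by rewrite fmorph_eq0 subr_eq0.
have -> : ratr ((c2 - c1) / (a1 - a2)) = b.
  rewrite fmorph_div /=; apply: (mulIf nz); rewrite divfK // !rmorphB /=.
  move: e; nra.
by [].
Qed.
End Q.



Fixpoint PQ (A B C : int) (m : nat) : int * int :=
  if m is m'.+1 then (A * (PQ A B C m').2 - B * (PQ A B C m').1, - (C * (PQ A B C m').1))
  else (1, 0).

Lemma PQ_spec (R : realType) (A B C : int) (x : R) (m : nat) :
  A%:~R * x ^+ 2 + B%:~R * x + C%:~R = 0 ->
  (A%:~R) ^+ m * x ^+ m.+1 = ((PQ A B C m).1)%:~R * x + ((PQ A B C m).2)%:~R.
Proof.
move=> hx; elim: m => [|m IH]; first by rewrite /= expr0 expr1 mul1r; rewrite ?mul1r ?mulr1z ?addr0 //.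
rewrite /=; set P := (PQ A B C m).1; set Q := (PQ A B C m).2.
move: IH; rewrite -/P -/Q => IH.
rewrite !rmorphB !rmorphN !rmorphM /=.
have -> : (A%:~R : R) ^+ m.+1 * x ^+ m.+2 = A%:~R * x * ((A%:~R) ^+ m * x ^+ m.+1).
  by rewrite !exprS; ring.
rewrite IH; apply/eqP; rewrite -subr_eq0; apply/eqP.
have -> : (A%:~R : R) * x * (P%:~R * x + Q%:~R) - ((A%:~R * Q%:~R - B%:~R * P%:~R) * x + - (C%:~R * P%:~R))
  = P%:~R * (A%:~R * x ^+ 2 + B%:~R * x + C%:~R) by ring.
by rewrite hx mulr0.
Qed.

Lemma vieta (R : realType) (a b c x y : R) : a * x ^+ 2 + b * x + c = 0 ->
  a * y ^+ 2 + b * y + c = 0 -> x != y -> a * (x + y) = - b /\ a * x * y = c.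
Proof.
move=> hx hy nxy.
have e : (x - y) * (a * (x + y) + b) = (a * x ^+ 2 + b * x + c) - (a * y ^+ 2 + b * y + c) by ring.
rewrite hx hy subr0 in e.
move/eqP: e; rewrite mulf_eq0 subr_eq0 (negbTE nxy) /= => /eqP e.
split; first by move: e; lra.
have e2 : c - a * x * y = (a * x ^+ 2 + b * x + c) - x * (a * (x + y) + b) by ring.
by move: e2; rewrite hx e mulr0 subr0 => /eqP; rewrite subr_eq0 => /eqP ->.
Qed.

Lemma pow_small (R : realType) (M e : R) : 0 < M -> M < 1 -> 0 < e -> exists n : nat, M ^+ n < e.
Proof.
move=> M0 M1 e0.
have g1 : 1 < M^-1 by rewrite invf_gt1.
have [n hn] := @pow_unbounded R (M^-1) (e^-1) g1.
exists n; move: hn; rewrite exprVn ltf_pV2 // posrE ?exprn_gt0 //.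
Qed.

Lemma iii_equiv (R : realType) (a b c x y : R) : 0 < a -> a * (x + y) = - b -> a * x * y = c ->
  x != 1 -> y != 1 ->
  ((2 * a + b <= 0 \/ (0 < 2 * a + b /\ a + b + c < 0)) <-> (1 < x \/ 1 < y)).
Proof.
move=> a0 hb hc n1 n1'.
have eb : b = - (a * (x + y)) by rewrite hb opprK.
rewrite eb -hc; split.
  move=> H; case: (boolP ((1 < x) || (1 < y))) => [/orP//|].
  rewrite negb_or -!leNgt => /andP [x1 y1].
  have x1' : x < 1 by rewrite lt_neqAle n1.
  have y1' : y < 1 by rewrite lt_neqAle n1'.
  have : 0 < a * ((1 - x) * (1 - y)) by rewrite !mulr_gt0 // subr_gt0.
  case: H => [H|[_ H]]; nra.
move=> H.
case: (lerP (2 * a + - (a * (x + y))) 0) => [h|h]; [by left | right; split => //].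
have : 0 < a * (2 - (x + y)) by move: h; rewrite mulrBr; lra.
rewrite pmulr_rgt0 // subr_gt0 => hxy.
case: H => H.
  have : 0 < a * ((x - 1) * (1 - y)) by rewrite !mulr_gt0 // subr_gt0 //; lra.
  nra.
have : 0 < a * ((y - 1) * (1 - x)) by rewrite !mulr_gt0 // subr_gt0 //; lra.
nra.
Qed.



Lemma evalN0 (R : realType) (b : R) : evalN 0 b = 0.
Proof. by rewrite /evalN map_poly0 horner0. Qed.

Theorem theorem7 (R : realType) (A B C : int) (beta beta' : R) :
  0 < A ->
  irreducible_poly (map_poly (intr : int -> rat) (quadZ A B C)) ->
  root (map_poly (intr : int -> R) (quadZ A B C)) beta ->
  root (map_poly (intr : int -> R) (quadZ A B C)) beta' ->
  beta' != beta ->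
  ((forall alpha : R, p_finite beta alpha) <->
     (2 * A + B <= 0 \/ (0 < 2 * A + B /\ A + B + C < 0))) /\
  ((2 * A + B <= 0 \/ (0 < 2 * A + B /\ A + B + C < 0)) <->
     (1 < beta \/ 1 < beta')).
Proof.
move=> A0 irr rb rb' nb.
have ha := @rootq R A B C beta rb.
have ha' := @rootq R A B C beta' rb'.
have nb2 : beta != beta' by rewrite eq_sym.
have [vs vp] := @vieta R _ _ _ _ _ ha ha' nb2.
have aR0 : (0 : R) < A%:~R by rewrite ltr0z.
have n1 : beta != 1.
  apply/eqP => e1; apply: (@no_rat_root R A B C A0 1 irr).
  by have -> : ratr 1 = beta :> R by rewrite rmorph1 e1.
have n1' : beta' != 1.
  apply/eqP => e1; apply: (@no_rat_root R A B C A0 1 irr).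
  by have -> : ratr 1 = beta' :> R by rewrite rmorph1 e1.
have E23 : (2 * A + B <= 0 \/ (0 < 2 * A + B /\ A + B + C < 0)) <-> (1 < beta \/ 1 < beta').
  have := @iii_equiv R _ _ _ _ _ aR0 vs vp n1 n1'.
  have -> : (2 * A + B <= 0) = (2 * A%:~R + B%:~R <= 0 :> R).
    by rewrite -(lerz0 R) rmorphD rmorphM /=.
  have -> : (0 < 2 * A + B) = (0 < 2 * A%:~R + B%:~R :> R).
    by rewrite -(ltr0z R) rmorphD rmorphM /=.
  have -> : (A + B + C < 0) = (A%:~R + B%:~R + C%:~R < 0 :> R).
    by rewrite -(ltrz0 R) !rmorphD /=.
  by [].
suff E13 : (forall alpha : R, p_finite beta alpha) <-> (1 < beta \/ 1 < beta').
  by move: E13 E23; tauto.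
split; last first.
  move=> [H|H] alpha; first exact: fin_gt1.
  case: (pselect (exists f0, evalN f0 beta = alpha)) => [[f0 hf0]|nf].
    apply: (sub_finite_set _ (@fin_gt1 R beta' (evalN f0 beta') H)) => f /= hf.
    apply: (@conj_eq R A B C A0 beta beta' f f0 irr rb rb'); by rewrite hf hf0.
  apply: (sub_finite_set _ (@finite_set0 _)) => f /= hf; apply: nf; by exists f.
move=> H; case: (boolP ((1 < beta) || (1 < beta'))) => [/orP//|].
rewrite negb_or -!leNgt => /andP [b1 b1']; exfalso.
have bl : beta < 1 by rewrite lt_neqAle n1 b1.
have bl' : beta' < 1 by rewrite lt_neqAle n1' b1'.
have q1 : 0 < A + B + C.
  rewrite -(ltr0z R) !rmorphD /=.
  have : 0 < A%:~R * ((1 - beta) * (1 - beta')) :> R by rewrite !mulr_gt0 // subr_gt0.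
  lra.
case: (lerP 0 (A + B)) => hAB.
  apply: (@pump R beta ((absz (A+B+C))%:P) ((absz (A+B))%:P + (absz A)%:P * 'X) 1%N _ _ (H _)).
    by rewrite polyC_eq0 absz_eq0 lt0r_neq0.
  have g1 : 0 <= A + B + C := ltW q1.
  have g2 : 0 <= A := ltW A0.
  rewrite !evalND evalNM !evalNC evalNX expr1 !natr_absz !ger0_norm //.
  rewrite !rmorphD /=; lra.
have sum1 : 1 < beta + beta'.
  have h : (A + B)%:~R < 0 :> R by rewrite ltrz0.
  rewrite rmorphD /= in h.
  have : A%:~R * (1 - (beta + beta')) < 0 :> R by rewrite mulrBr mulr1 vs; lra.
  by rewrite pmulr_rlt0 // subr_lt0.
have bp : 0 < beta by lra.
have bp' : 0 < beta' by lra.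
set eps := `|beta - beta'|.
have eps0 : 0 < eps by rewrite normr_gt0 subr_eq0.
set M := Num.max beta beta'.
have M0 : 0 < M by rewrite lt_max bp.
have M1 : M < 1 by rewrite gt_max bl bl'.
have [n hn] := @pow_small R M eps M0 M1 eps0.
set m := n.+1.
have hpow : forall x : R, 0 < x -> x < 1 -> x <= M -> x ^+ m.+1 < eps.
  move=> x x0 x1 xM.
  have h1 : x ^+ n <= M ^+ n by apply: lerXn2r => //; rewrite nnegrE ltW.
  have h2 : x ^+ m.+1 <= x ^+ n.
    rewrite /m !exprS mulrA; apply: ler_piMl; first by rewrite exprn_ge0 ?ltW.
    by rewrite -expr2 expr_le1 // ltW.
  exact: le_lt_trans h2 (le_lt_trans h1 hn).
have hu := hpow beta bp bl (ltac:(by rewrite le_max lexx)).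
have hv := hpow beta' bp' bl' (ltac:(by rewrite le_max lexx orbT)).
set P := (PQ A B C m).1; set Q := (PQ A B C m).2.
set w := (A%:~R : R) ^+ m.
have w0 : 0 < w by rewrite exprn_gt0.
set u := beta ^+ m.+1; set v := beta' ^+ m.+1.
have e1 : w * u = P%:~R * beta + Q%:~R by exact: (@PQ_spec R A B C beta m ha).
have e2 : w * v = P%:~R * beta' + Q%:~R by exact: (@PQ_spec R A B C beta' m ha').
set d := beta - beta'.
have dn : d != 0 by rewrite subr_eq0.
have d0 : 0 < d * d by rewrite lt_neqAle eq_sym mulf_neq0 //= -expr2 sqr_ge0.
have hP : P <= A ^+ m.
  have eP : P%:~R * d = w * (u - v) by rewrite [w * (u - v)]mulrBr e1 e2 /d; ring.
  have key : (u - v) * d <= d * d.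
    have u0 : 0 < u by rewrite exprn_gt0.
    have v0 : 0 < v by rewrite exprn_gt0.
    case: (ltgtP beta beta') => [lt|gt|eq].
    - have uv : u <= v by apply: lerXn2r => //; rewrite ?nnegrE ltW.
      have ed : eps = - d by rewrite /eps ltr0_norm // subr_lt0.
      rewrite ed in hv.
      have dn' : d < 0 by rewrite /d subr_lt0.
      have k1 : 0 <= u * (- d) by rewrite mulr_ge0 ?ltW // oppr_gt0.
      have k2 : 0 <= (- d - v) * (- d) by rewrite mulr_ge0 ?ltW // ?subr_gt0 ?oppr_gt0.
      nra.
    - have uv : v <= u by apply: lerXn2r => //; rewrite ?nnegrE ltW.
      have ed : eps = d by rewrite /eps gtr0_norm // subr_gt0.
      rewrite ed in hu.
      have dp : 0 < d by rewrite /d subr_gt0.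
      have k1 : 0 <= v * d by rewrite mulr_ge0 ?ltW.
      have k2 : 0 <= (d - u) * d by rewrite mulr_ge0 ?ltW // ?subr_gt0.
      nra.
    - by move: nb2; rewrite eq eqxx.
  have : P%:~R * (d * d) <= w * (d * d).
    have -> : P%:~R * (d * d) = (P%:~R * d) * d by rewrite mulrA.
    rewrite eP -mulrA; apply: ler_wpM2l; [exact: ltW | exact: key].
  rewrite ler_pM2r // => h.
  by rewrite -(ler_int R) rmorphXn.
have hQ : Q <= 0.
  have eQ : Q%:~R * (beta' - beta) = w * (beta * beta' * (beta ^+ m - beta' ^+ m)).
    have : Q%:~R * (beta' - beta) = beta' * (w * u) - beta * (w * v) by rewrite e1 e2; ring.
    by rewrite /u /v !exprSr => ->; ring.
  have sg : (beta ^+ m - beta' ^+ m) * (beta' - beta) <= 0.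
    case: (ltgtP beta beta') => [lt|gt|eq].
    - have uv : beta ^+ m <= beta' ^+ m by apply: lerXn2r => //; rewrite ?nnegrE ltW.
      nra.
    - have uv : beta' ^+ m <= beta ^+ m by apply: lerXn2r => //; rewrite ?nnegrE ltW.
      nra.
    - by move: nb2; rewrite eq eqxx.
  have : Q%:~R * (d * d) <= 0.
    have -> : Q%:~R * (d * d) = (Q%:~R * (beta' - beta)) * (beta' - beta) by rewrite /d; ring.
    rewrite eQ -!mulrA; apply: mulr_ge0_le0; first exact: ltW.
    rewrite mulrA; apply: mulr_ge0_le0 => //; by rewrite mulr_ge0 // ltW.
  by rewrite pmulr_lle0 // lerz0.
have g3 : 0 <= A ^+ m - P by rewrite subr_ge0.
have g4 : 0 <= - Q by rewrite oppr_ge0.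
have g5 : 0 <= A ^+ m by rewrite exprn_ge0 // ltW.
set Rp := (absz (A ^+ m - P))%:P * 'X + (absz (- Q))%:P.
set f0 := (absz (A ^+ m))%:P * 'X.
have ef0 : evalN f0 beta = w * beta.
  by rewrite /f0 evalNM evalNC evalNX natr_absz ger0_norm // rmorphXn.
have ident : evalN Rp beta + beta ^+ m * evalN f0 beta = evalN f0 beta.
  rewrite ef0 /Rp evalND !evalNM !evalNC evalNX !natr_absz !ger0_norm //.
  rewrite rmorphB rmorphN rmorphXn /= -/w.
  have -> : beta ^+ m * (w * beta) = w * u by rewrite /u exprSr; ring.
  rewrite e1; ring.
have Rnz : Rp != 0.
  apply/eqP => e0; move: ident; rewrite e0 evalN0 add0r ef0 => h.
  have bm : beta ^+ m < 1 by rewrite exprn_ilt1 // ltW.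
  have : 0 < w * beta * (1 - beta ^+ m) by rewrite !mulr_gt0 // subr_gt0.
  nra.
exact: (@pump R beta Rp f0 m Rnz ident (H _)).
Qed.
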